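(* Let $f:\mathbb{R}^n\to\mathbb{R}$ be $r+1$ times continuously differentiable for some integer $r\ge1$, with $\nabla f$ Lipschitz continuous with constant $L$. Let $x^*$ satisfy $\nabla f(x^* )=0$, and write $\nabla^2 f(x^* )=\sum_{i=1}^n\lambda_i v_iv_i^T$ with $\{v_1,\dots,v_n\}$ orthonormal and \[ \lambda_1\ge\dots\ge\lambda_{n-p}\ge 0>\lambda_{n-p+1}\ge\dots\ge\lambda_n \] for some $1\le p<n$; suppose $\lambda_1>0$. Let $0<\alpha<4/\lambda_1$ and $\beta\in(\max(-1+\alpha\lambda_1/2,0),1)$, and let \[ DG(x^*,x^* )=\begin{bmatrix}(1+\beta)I-\alpha\nabla^2 f(x^* ) & -\beta I\\ I & 0\end{bmatrix}. \] For $i=n-p+1,\dots,n$ define \[ \mu_i^{\mathrm{hi}}=\tfrac12\Big[(1+\beta-\alpha\lambda_i)+\sqrt{(1+\beta-\alpha\lambda_i)^2-4\beta}\Big], \] which is a real eigenvalue of $DG(x^*,x^* )$ with $\mu_i^{\mathrm{hi}}>1$. Then for each $i=n-p+1,\dots,n$, the vector $\begin{bmatrix} v_i\\ (1/\mu_i^{\mathrm{hi}})v_i\end{bmatrix}\in\mathbb{R}^{2n}$ is an eigenvector of $DG(x^*,x^* )$ corresponding to the eigenvalue $\mu_i^{\mathrm{hi}}$, and the set of these $p$ vectors forms an orthogonal basis for the invariant subspace of $\mathbb{R}^{2n}$ corresponding to the eigenvalues of $DG(x^*,x^* )$ whose magnitude is greater than $1$.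
   Context: $DG(x^*,x^* )$ is the Jacobian at $(x^*,x^* )$ of the heavy-ball map $G(z_1,z_2)=(z_1-\alpha\nabla f(z_1)+\beta(z_1-z_2),\,z_1)$. The invariant subspace corresponding to eigenvalues of magnitude greater than $1$ is the sum of the (generalized) eigenspaces of $DG(x^*,x^* )$ for eigenvalues of modulus greater than $1$. *)

(* Defs.v *)
From HB Require Import structures.
From mathcomp Require Import all_boot all_order all_algebra.
From mathcomp Require Import all_classical all_reals all_analysis.
From mathcomp Require Import complex.
Set Implicit Arguments. Unset Strict Implicit. Unset Printing Implicit Defensive.
Import Order.TTheory GRing.Theory Num.Theory.
Import numFieldNormedType.Exports.
Local Open Scope ring_scope.

Section Defs.
Variables (R : realType) (n : nat).

Definition ebasis (i : 'I_n) : 'cV[R]_n := delta_mx i 0.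

Definition partial (i : 'I_n) (g : 'cV[R]_n -> R) : 'cV[R]_n -> R :=
  fun x => 'D_(ebasis i) g x.

Fixpoint Ck (k : nat) (g : 'cV[R]_n -> R) : Prop :=
  match k with
  | 0 => continuous g
  | k.+1 => continuous g /\
      forall i : 'I_n, (forall x, derivable g x (ebasis i)) /\ Ck k (partial i g)
  end.

Definition grad (g : 'cV[R]_n -> R) (x : 'cV[R]_n) : 'cV[R]_n :=
  \col_i partial i g x.

Definition hessian (g : 'cV[R]_n -> R) (x : 'cV[R]_n) : 'M[R]_n :=
  \matrix_(i, j) partial j (partial i g) x.

Definition enorm (v : 'cV[R]_n) : R := Num.sqrt (\sum_i v i 0 ^+ 2).

Definition grad_lipschitz (g : 'cV[R]_n -> R) (L : R) : Prop :=
  forall x y, enorm (grad g x - grad g y) <= L * enorm (x - y).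

End Defs.

(* Jacobian of the heavy-ball map at (xs, xs) *)
Definition DG (R : realType) (n : nat) (alpha beta : R) (H : 'M[R]_n)
  : 'M[R]_(n + n) :=
  block_mx ((1 + beta)%:M - alpha *: H) (- beta%:M) 1%:M 0.

Definition cplx (R : realType) (m k : nat) (A : 'M[R]_(m, k)) : 'M[(complex R)]_(m, k) :=
  map_mx (fun x => (x%:C)%C) A.

Definition gen_eigvec (C : fieldType) (N : nat) (A : 'M[C]_N) (mu : C)
  (w : 'cV[C]_N) : Prop :=
  exists m : nat, (A - mu%:M) ^+ m *m w = 0.

(* the sum (over C) of the generalized eigenspaces of A for the
   eigenvalues of modulus > 1 : finite sums of generalized eigenvectors
   whose eigenvalues have modulus > 1 *)
Definition in_unstable_csubspace (R : realType) (N : nat) (A : 'M[(complex R)]_N)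
  (w : 'cV[(complex R)]_N) : Prop :=
  exists (s : seq ((complex R) * 'cV[(complex R)]_N)),
    (forall q, q \in s -> 1 < `|q.1| /\ q.1 \in root (char_poly A)
                         /\ gen_eigvec A q.1 q.2) /\
    w = \sum_(q <- s) q.2.

Definition in_unstable_subspace (R : realType) (N : nat) (A : 'M[R]_N)
  (w : 'cV[R]_N) : Prop :=
  in_unstable_csubspace (cplx A) (cplx w).

Definition mu_hi (R : realType) (alpha beta l : R) : R :=
  2^-1 * ((1 + beta - alpha * l)
          + Num.sqrt ((1 + beta - alpha * l) ^+ 2 - 4 * beta)).

Definition stack_vec (R : realType) (n : nat) (mu : R) (v : 'cV[R]_n)
  : 'cV[R]_(n + n) :=
  col_mx v (mu^-1 *: v).

(* Main.v *)
Require Import Defs.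
From HB Require Import structures.
From mathcomp Require Import all_boot all_order all_algebra.
From mathcomp Require Import all_classical all_reals all_analysis.
From mathcomp Require Import complex ring lra.
Import Order.TTheory GRing.Theory Num.Theory.
Import numFieldNormedType.Exports.
Local Open Scope ring_scope.
Lemma mu_facts (R : realType) (alpha beta l : R) :
  l < 0 -> 0 < alpha -> 0 < beta -> beta < 1 ->
  let t := 1 + beta - alpha * l in
  let m := mu_hi alpha beta l in
  let lo := 2^-1 * (t - Num.sqrt (t ^+ 2 - 4 * beta)) in
  [/\ 1 < m, 0 < lo, lo < 1, m ^+ 2 - t * m + beta = 0 & lo ^+ 2 - t * lo + beta = 0].
Proof.
move=> hl ha hb0 hb1 t m lo.
have ht : 1 + beta < t by rewrite /t; nra.
have hD : 0 <= t ^+ 2 - 4 * beta by nra.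
have hs := sqr_sqrtr hD.
have hs0 := sqrtr_ge0 (t ^+ 2 - 4 * beta).
rewrite /m /mu_hi -/t /lo.
move: hs hs0; set s := Num.sqrt _ => hs hs0.
have hm : 1 < 2^-1 * (t + s) by nra.
have hprod : (2^-1 * (t + s)) * (2^-1 * (t - s)) = beta by nra.
split; nra.
Qed.
Lemma mu_prod (R : realType) (alpha beta l : R) :
  l < 0 -> 0 < alpha -> 0 < beta -> beta < 1 ->
  let t := 1 + beta - alpha * l in
  mu_hi alpha beta l * (2^-1 * (t - Num.sqrt (t ^+ 2 - 4 * beta))) = beta.
Proof.
move=> hl ha hb0 hb1 t.
have ht : 1 + beta < t by rewrite /t; nra.
have hD : 0 <= t ^+ 2 - 4 * beta by nra.
have hs := sqr_sqrtr hD.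
rewrite /mu_hi -/t.
move: hs; set s := Num.sqrt _ => hs.
nra.
Qed.
Lemma norm_gt1 (R : realType) (mu : complex R) : 1 < `|mu| ->
  1 < (complex.Re mu) ^+ 2 + (complex.Im mu) ^+ 2.
Proof.
rewrite normc_def ltcE /= => /andP[_ h1].
rewrite ltNge; apply/negP => h.
have : Num.sqrt (complex.Re mu ^+ 2 + complex.Im mu ^+ 2) <= 1.
  by rewrite -sqrtr1 ler_sqrt.
by rewrite leNgt h1.
Qed.

Lemma stab_root (R : realType) (t beta : R) (mu : complex R) :
  0 < beta -> beta < 1 -> - (1 + beta) < t -> t <= 1 + beta -> 1 < `|mu| ->
  mu ^+ 2 - real_complex R t * mu + real_complex R beta != 0.
Proof.
move=> hb0 hb1 ht1 ht2 /norm_gt1; case: mu => a b /= hab.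
apply/negP; rewrite eq_complex /= => /andP[/eqP h2 /eqP h3].
rewrite !expr2 in hab.
have [hb|hb] := eqVneq b 0.
  subst b. 
  have ha : a * a - t * a + beta = 0 by lra.
  rewrite mulr0 addr0 in hab.
  have [ha1|ha1] := ltrP 0 a.
    have ha2 : 1 < a by nra.
    have : 0 < (a - 1) * (a - beta) by apply: mulr_gt0; lra.
    nra.
  have ha2 : a < -1 by nra.
  have : 0 < (- a - 1) * (- a - beta) by apply: mulr_gt0; lra.
  nra.
have h4 : 2 * a = t.
  have : b * (2 * a - t) = 0 by lra.
  by move/eqP; rewrite mulf_eq0 (negbTE hb) /= subr_eq0 => /eqP.
nra.
Qed.

Lemma neq_lo (R : realType) (lo : R) (mu : complex R) :
  0 < lo -> lo < 1 -> 1 < `|mu| -> mu != real_complex R lo.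
Proof.
move=> h0 h1 /norm_gt1; case: mu => a b /= hab.
apply/negP; move/eqP => [ha hb]; subst; nra.
Qed.
Lemma char_poly_tr (F : fieldType) N (M : 'M[F]_N) : char_poly M^T = char_poly M.
Proof.
rewrite /char_poly -det_tr; congr (\det _).
by apply/matrixP => i j; rewrite !mxE eq_sym.
Qed.
Lemma normrc (R : realType) (x : R) : 0 <= x -> `|real_complex R x| = real_complex R x.
Proof. by move=> hx; rewrite normc_def /= expr0n /= addr0 sqrtr_sqr ger0_norm. Qed.
Lemma trmx_map (R : realType) m k (M : 'M[R]_(m,k)) :
  (map_mx (real_complex R) M)^T = map_mx (real_complex R) M^T.
Proof. by apply/matrixP => a b; rewrite !mxE. Qed.

Section Main.
Variables (R : realType) (n : nat) (lam : nat -> R) (v : nat -> 'cV[R]_n) (alpha beta : R).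
Hypothesis orth : forall i j, (i < n)%N -> (j < n)%N -> (v i)^T *m v j = (i == j)%:R%:M.
Local Notation H := (\sum_(i < n) lam i *: (v i *m (v i)^T)).
Local Notation A := (DG alpha beta H).
Local Notation rc := (real_complex R).

Lemma vtH i : (i < n)%N -> (v i)^T *m H = lam i *: (v i)^T.
Proof.
move=> hi; rewrite mulmx_sumr (bigD1 (Ordinal hi)) //= big1 ?addr0.
  by rewrite -scalemxAr mulmxA orth // eqxx mul1mx.
move=> j hj; rewrite -scalemxAr mulmxA orth //.
have -> : (i == (j : nat)) = false.
  apply/negbTE; move: hj; apply: contra => /eqP h; apply/eqP/val_inj; by rewrite /= -h.
by rewrite /= mul_scalar_mx scale0r scaler0.
Qed.

Lemma Hv i : (i < n)%N -> H *m v i = lam i *: v i.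
Proof.
move=> hi; rewrite mulmx_suml (bigD1 (Ordinal hi)) //= big1 ?addr0.
  by rewrite -scalemxAl -mulmxA orth // eqxx mulmx1.
move=> j hj; rewrite -scalemxAl -mulmxA orth //.
have -> : ((j : nat) == i) = false.
  apply/negbTE; move: hj; apply: contra => /eqP h; apply/eqP/val_inj; by rewrite /= h.
by rewrite /= mul_mx_scalar scale0r scaler0.
Qed.

Lemma sum_vvt : \sum_(i < n) v i *m (v i)^T = 1%:M.
Proof.
pose V : 'M[R]_n := \matrix_(k, i) v i k 0.
have hV : V^T *m V = 1%:M.
  apply/matrixP => i j; rewrite !mxE.
  have := congr1 (fun M : 'M[R]_(1, 1) => M 0 0) (@orth i j (ltn_ord i) (ltn_ord j)).
  rewrite /= !mxE /= mulr1n => <-. 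
  by apply: eq_bigr => k _; rewrite !mxE.
have := mulmx1C hV => <-.
apply/matrixP => k l; rewrite summxE !mxE.
by apply: eq_bigr => i _; rewrite !mxE big_ord1 !mxE.
Qed.

Definition aS i (W : 'cV[complex R]_(n + n)) := ((cplx (v i))^T *m usubmx W) 0 0.
Definition bS i (W : 'cV[complex R]_(n + n)) := ((cplx (v i))^T *m dsubmx W) 0 0.

Lemma aS_A i W : (i < n)%N ->
  aS i (cplx A *m W) = rc (1 + beta - alpha * lam i) * aS i W - rc beta * bS i W.
Proof.
move=> hi; rewrite /aS /bS -[W]vsubmxK /DG /cplx map_block_mx mul_block_col !col_mxKu col_mxKd.
rewrite mulmxDr !mulmxA !trmx_map -!map_mxM.
have e1 : (v i)^T *m ((1 + beta)%:M - alpha *: H) = (1 + beta - alpha * lam i) *: (v i)^T.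
  by rewrite mulmxBr mul_mx_scalar -scalemxAr vtH // scalerA scalerBl.
have e2 : (v i)^T *m (- beta%:M) = (- beta) *: (v i)^T.
  by rewrite mulmxN mul_mx_scalar scaleNr.
rewrite e1 e2 !map_mxZ -!scalemxAl !mxE rmorphN /=.
by rewrite mulNr.
Qed.

Lemma bS_A i W : bS i (cplx A *m W) = aS i W.
Proof.
rewrite /aS /bS -[W]vsubmxK /DG /cplx map_block_mx mul_block_col !col_mxKu col_mxKd.
rewrite mulmxDr !mulmxA !trmx_map -!map_mxM mulmx1 mulmx0.
rewrite map_mx0.
by rewrite mul0mx addr0.
Qed.

Lemma aSB i W1 W2 : aS i (W1 - W2) = aS i W1 - aS i W2.
Proof. by rewrite /aS linearB /= mulmxBr !mxE. Qed.
Lemma bSB i W1 W2 : bS i (W1 - W2) = bS i W1 - bS i W2.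
Proof. by rewrite /bS linearB /= mulmxBr !mxE. Qed.
Lemma aSZ i c W : aS i (c *: W) = c * aS i W.
Proof. by rewrite /aS linearZ /= -scalemxAr mxE. Qed.
Lemma bSZ i c W : bS i (c *: W) = c * bS i W.
Proof. by rewrite /bS linearZ /= -scalemxAr mxE. Qed.
Lemma aS_sum i (s : seq (complex R * 'cV[complex R]_(n + n))) :
  aS i (\sum_(q <- s) q.2) = \sum_(q <- s) aS i q.2.
Proof. by rewrite /aS linear_sum mulmx_sumr summxE. Qed.
Lemma bS_sum i (s : seq (complex R * 'cV[complex R]_(n + n))) :
  bS i (\sum_(q <- s) q.2) = \sum_(q <- s) bS i q.2.
Proof. by rewrite /bS linear_sum mulmx_sumr summxE. Qed.

Definition Xm (mu : complex R) := cplx A - mu%:M.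

Lemma aS_X i mu W : (i < n)%N ->
  aS i (Xm mu *m W) = (rc (1 + beta - alpha * lam i) - mu) * aS i W - rc beta * bS i W.
Proof. move=> hi; rewrite /Xm mulmxBl mul_scalar_mx aSB aSZ aS_A //. ring. Qed.

Lemma bS_X i mu W : bS i (Xm mu *m W) = aS i W - mu * bS i W.
Proof. by rewrite /Xm mulmxBl mul_scalar_mx bSB bSZ bS_A. Qed.

Lemma XmS mu m (W : 'cV[complex R]_(n + n)) : (Xm mu) ^+ m.+1 *m W = (Xm mu) ^+ m *m (Xm mu *m W).
Proof. by rewrite exprSr mulmxA. Qed.

Lemma stab_kill i mu : (i < n)%N ->
  mu ^+ 2 - rc (1 + beta - alpha * lam i) * mu + rc beta != 0 ->
  forall m W, (Xm mu) ^+ m *m W = 0 -> aS i W = 0 /\ bS i W = 0.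
Proof.
move=> hi hP m; elim: m => [|m IH] W.
  by rewrite expr0 mul1mx => ->; rewrite /aS /bS linear0 mulmx0 linear0 mulmx0 !mxE.
rewrite XmS => /IH [].
rewrite aS_X // bS_X.
set a := aS i W; set b := bS i W; set t := rc _.
move=> e1 e2.
have hb : (mu ^+ 2 - t * mu + rc beta) * b = 0.
  have -> : (mu ^+ 2 - t * mu + rc beta) * b = - ((t - mu) * a - rc beta * b) + (t - mu) * (a - mu * b) by ring.
  by rewrite e1 e2; ring.
move/eqP: hb; rewrite mulf_eq0 (negbTE hP) /= => /eqP hb.
split => //.
by move: e2; rewrite hb mulr0 subr0.
Qed.

Lemma unstab_kill i mu nu : (i < n)%N ->
  nu ^+ 2 - rc (1 + beta - alpha * lam i) * nu + rc beta = 0 -> nu != mu ->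
  forall m W, (Xm mu) ^+ m *m W = 0 -> nu * aS i W - rc beta * bS i W = 0.
Proof.
move=> hi hr hne m.
suff hpow : forall W, nu * aS i ((Xm mu) ^+ m *m W) - rc beta * bS i ((Xm mu) ^+ m *m W)
   = (nu - mu) ^+ m * (nu * aS i W - rc beta * bS i W).
  move=> W hW.
  have h0 : (nu - mu) ^+ m * (nu * aS i W - rc beta * bS i W) = 0.
    rewrite -hpow hW.
    have -> : aS i 0 = 0 by rewrite /aS linear0 mulmx0 mxE.
    have -> : bS i 0 = 0 by rewrite /bS linear0 mulmx0 mxE.
    by ring.
  move/eqP: h0; rewrite mulf_eq0 expf_eq0 subr_eq0 (negbTE hne) andbF /=.
  by move/eqP.
elim: m => [|m IH] W; first by rewrite expr0 mul1mx mul1r.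
rewrite XmS IH aS_X // bS_X exprSr.
set a := aS i W; set b := bS i W; set t := rc _.
have -> : nu * ((t - mu) * a - rc beta * b) - rc beta * (a - mu * b) =
   (nu - mu) * (nu * a - rc beta * b) - (nu ^+ 2 - t * nu + rc beta) * a by ring.
by rewrite hr mul0r subr0 mulrA.
Qed.

Definition muh i := mu_hi alpha beta (lam i).
Definition uu i := stack_vec (muh i) (v i).

Lemma eig_u i : (i < n)%N -> lam i < 0 -> 0 < alpha -> 0 < beta -> beta < 1 ->
  A *m uu i = muh i *: uu i.
Proof.
move=> hi hl ha hb0 hb1.
have [h1 _ _ hr _] := @mu_facts R alpha beta (lam i) hl ha hb0 hb1.
rewrite /uu /stack_vec /DG mul_block_col scale_col_mx mul1mx mul0mx addr0.
rewrite -/(muh i) in h1 hr *.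
set m := muh i in h1 hr *.
congr col_mx; last by rewrite scalerA divff ?scale1r // gt_eqF // (lt_trans ltr01 h1).
rewrite mulmxBl mul_scalar_mx -scalemxAl Hv // scalerA mulNmx mul_scalar_mx scalerA -!scalerBl.
congr (_ *: _).
have hm : m != 0 by rewrite gt_eqF // (lt_trans ltr01 h1).
apply: (mulfI hm).
rewrite !mulrBr mulrA mulrCA divff // mulr1.
move: hr; rewrite expr2 => hr.
have -> : m * m = m * (1 + beta) - alpha * lam i * m - beta.
  nra.
ring.
Qed.

Lemma u_neq0 i : (i < n)%N -> uu i != 0.
Proof.
move=> hi; apply/negP => /eqP h.
have := congr1 usubmx h; rewrite /uu /stack_vec col_mxKu linear0 => hv.
have := @orth i i hi hi; rewrite hv trmx0 mul0mx eqxx.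
move/matrixP/(_ 0 0); rewrite !mxE /= => /eqP; by rewrite eq_sym oner_eq0.
Qed.

Lemma u_unstable i : (i < n)%N -> lam i < 0 -> 0 < alpha -> 0 < beta -> beta < 1 ->
  in_unstable_subspace A (uu i).
Proof.
move=> hi hl ha hb0 hb1.
have [h1 _ _ hr _] := @mu_facts R alpha beta (lam i) hl ha hb0 hb1.
rewrite -/(muh i) in h1 hr.
have he := @eig_u i hi hl ha hb0 hb1.
exists [:: (rc (muh i), cplx (uu i))]; split; last by rewrite big_seq1.
move=> q; rewrite inE => /eqP -> /=.
split; first by rewrite normrc ?ltcE /= ?eqxx ?h1 // ltW // (lt_trans ltr01 h1).
split.
  suff : eigenvalue (cplx A) (rc (muh i)) by rewrite eigenvalue_root_char.
  rewrite /cplx (eigenvalue_map (real_complex R)).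
  rewrite eigenvalue_root_char -char_poly_tr -eigenvalue_root_char.
  apply/eigenvalueP; exists (uu i)^T; last by rewrite trmx_eq0 u_neq0.
  by rewrite -trmx_mul he linearZ.
exists 1%N; rewrite expr1 mulmxBl mul_scalar_mx /cplx -map_mxM he map_mxZ subrr.
done.
Qed.

Lemma u_orth i j : (i < n)%N -> (j < n)%N -> i <> j -> (uu i)^T *m uu j = 0.
Proof.
move=> hi hj hij; rewrite /uu /stack_vec tr_col_mx mul_row_col linearZ /=.
have -> : ((muh i)^-1 *: v i)^T = (muh i)^-1 *: (v i)^T by apply/matrixP => a b; rewrite !mxE.
rewrite -scalemxAl orth //.
have -> : (i == j) = false by apply/negbTE/eqP.
have -> : ((false%:R)%:M : 'M[R]_1) = 0 by apply/matrixP=> a b; rewrite !mxE mul0rn.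
by rewrite !scaler0 addr0.
Qed.

Lemma sum_delta (m k i : nat) (G : nat -> 'M[R]_1) : (m <= i < k)%N ->
  \sum_(m <= j < k) (if i == j then G j else 0) = G i.
Proof.
move=> hi; rewrite (bigD1_seq i) /= ?mem_index_iota ?iota_uniq // eqxx big1 ?addr0 //.
by move=> j /negbTE hj; rewrite eq_sym hj.
Qed.

Lemma indep (np : nat) (c : nat -> R) : \sum_(np <= i < n) c i *: uu i = 0 ->
  forall i, (np <= i)%N -> (i < n)%N -> c i = 0.
Proof.
move=> h i h1 h2.
have := congr1 (fun M => (v i)^T *m usubmx M) h.
rewrite /= linear_sum mulmx_sumr linear0 mulmx0.
rewrite (@eq_big_nat _ _ _ _ _ _ (fun j => if i == j then (c i)%:M else 0)); last first.
  move=> j /andP[hj1 hj2].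
  rewrite linearZ /= /uu /stack_vec col_mxKu -scalemxAr orth //.
  case: eqP => [<-|_]; first by rewrite scale_scalar_mx mulr1.
  by apply/matrixP => a b; rewrite !mxE mul0rn mulr0.
rewrite sum_delta ?h1 ?h2 //.
by move/matrixP/(_ 0 0); rewrite !mxE.
Qed.

Lemma expand (x : 'cV[R]_n) : x = \sum_(0 <= i < n) ((v i)^T *m x) 0 0 *: v i.
Proof.
rewrite big_mkord -{1}[x]mul1mx -sum_vvt mulmx_suml; apply: eq_bigr => i _.
by rewrite -mulmxA {1}[(v i)^T *m x]mx11_scalar mul_mx_scalar.
Qed.

Lemma span (np : nat) (w : 'cV[R]_(n + n)) : (np <= n)%N ->
  (forall i, (i < np)%N -> 0 <= lam i /\ alpha * lam i < 2 + 2 * beta) ->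
  (forall i, (np <= i)%N -> (i < n)%N -> lam i < 0) ->
  0 < alpha -> 0 < beta -> beta < 1 ->
  in_unstable_subspace A w -> exists c : nat -> R, w = \sum_(np <= i < n) c i *: uu i.
Proof.
move=> hnp Hst Hun ha hb0 hb1 [s [hs hw]].
pose c := fun i => ((v i)^T *m usubmx w) 0 0.
pose d := fun i => ((v i)^T *m dsubmx w) 0 0.
have ac : forall i, aS i (cplx w) = rc (c i).
  by move=> i; rewrite /aS /cplx -map_usubmx trmx_map -map_mxM mxE.
have bd : forall i, bS i (cplx w) = rc (d i).
  by move=> i; rewrite /bS /cplx -map_dsubmx trmx_map -map_mxM mxE.
have hst : forall i, (i < np)%N -> c i = 0 /\ d i = 0.
  move=> i hi; have hin : (i < n)%N by apply: leq_trans hnp.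
  have [h0 h1] := Hst i hi.
  have [e1 e2] : aS i (cplx w) = 0 /\ bS i (cplx w) = 0.
    rewrite hw aS_sum bS_sum; split; apply: big1_seq => q /andP[_ hq];
    have [hq1 [_ [m hm]]] := hs q hq;
    have hP : q.1 ^+ 2 - rc (1 + beta - alpha * lam i) * q.1 + rc beta != 0 by
      apply: stab_root => //; nra.
    - exact: (@stab_kill i q.1 hin hP m q.2 hm).1.
    - exact: (@stab_kill i q.1 hin hP m q.2 hm).2.
  move: e1 e2; rewrite ac bd => /eqP; rewrite fmorph_eq0 => /eqP ->.
  by move/eqP; rewrite fmorph_eq0 => /eqP ->.
have hun : forall i, (np <= i < n)%N -> d i = (muh i)^-1 * c i.
  move=> i /andP[hi1 hi2].
  have hl := Hun i hi1 hi2.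
  have [h1 hlo0 hlo1 _ hr] := @mu_facts R alpha beta (lam i) hl ha hb0 hb1.
  move: h1 hlo0 hlo1 hr; rewrite -/(muh i).
  set lo := 2^-1 * _ => h1 hlo0 hlo1 hr.
  have hpr : muh i * lo = beta by exact: (@mu_prod R alpha beta (lam i) hl ha hb0 hb1).
  have e : rc lo * aS i (cplx w) - rc beta * bS i (cplx w) = 0.
    rewrite hw aS_sum bS_sum !mulr_sumr -sumrB; apply: big1_seq => q /andP[_ hq].
    have [hq1 [_ [m hm]]] := hs q hq.
    apply: (@unstab_kill i q.1 (rc lo) hi2 _ _ m q.2 hm).
      by rewrite -rmorphXn -!rmorphM -rmorphB -rmorphD hr rmorph0.
    by rewrite eq_sym; apply: neq_lo.
  move: e; rewrite ac bd -!rmorphM -rmorphB => /eqP; rewrite fmorph_eq0 subr_eq0 => /eqP e.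
  have hm0 : muh i != 0 by rewrite gt_eqF // (lt_trans ltr01 h1).
  have hlo : lo != 0 by rewrite gt_eqF.
  apply: (mulfI hm0); rewrite mulrA divff // mul1r.
  apply: (mulfI hlo); by rewrite e mulrA [lo * _]mulrC hpr.
exists c.
have eqU : usubmx w = \sum_(np <= i < n) c i *: v i.
  rewrite {1}[usubmx w]expand (big_cat_nat (leq0n np) hnp) /= big_nat_cond big1 ?add0r //.
  by move=> i /andP[/andP[_ hi] _]; rewrite -/(c i) (hst i hi).1 scale0r.
have eqD : dsubmx w = \sum_(np <= i < n) c i *: ((muh i)^-1 *: v i).
  rewrite {1}[dsubmx w]expand (big_cat_nat (leq0n np) hnp) /= big_nat_cond big1 ?add0r //.
    apply: eq_big_nat => i hi; rewrite scalerA mulrC -/(d i) hun //.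
  by move=> i /andP[/andP[_ hi] _]; rewrite -/(d i) (hst i hi).2 scale0r.
rewrite -[w]vsubmxK eqU eqD -[X in _ = X]vsubmxK; congr col_mx.
  rewrite linear_sum; apply: eq_big_nat => i hi; by rewrite linearZ /= /uu /stack_vec col_mxKu.
rewrite linear_sum; apply: eq_big_nat => i hi; by rewrite /uu /stack_vec [X in _ = X]linearZ /= col_mxKd.
Qed.

End Main.

Theorem corollary2p5 (R : realType) (n r p : nat) (f : 'cV[R]_n -> R) (L : R)
  (xs : 'cV[R]_n) (lam : nat -> R) (v : nat -> 'cV[R]_n) (alpha beta : R) :
  (1 <= r)%N ->
  Ck (r.+1) f ->
  grad_lipschitz f L ->
  grad f xs = 0 ->
  (forall i j, (i < n)%N -> (j < n)%N -> (v i)^T *m v j = (i == j)%:R%:M) ->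
  hessian f xs = \sum_(i < n) lam i *: (v i *m (v i)^T) ->
  (1 <= p)%N -> (p < n)%N ->
  (forall i j, (i <= j)%N -> (j < n)%N -> lam j <= lam i) ->
  (forall i, (i < n - p)%N -> 0 <= lam i) ->
  (forall i, (n - p <= i)%N -> (i < n)%N -> lam i < 0) ->
  0 < lam 0%N ->
  0 < alpha -> alpha < 4 / lam 0%N ->
  Num.max (-1 + alpha * lam 0%N / 2) 0 < beta -> beta < 1 ->
  let A := DG alpha beta (hessian f xs) in
  let mu := fun i => mu_hi alpha beta (lam i) in
  let u := fun i => stack_vec (mu i) (v i) in
  (* each u_i is an eigenvector of A for the eigenvalue mu_i > 1,
     lying in the unstable invariant subspace *)
  (forall i, (n - p <= i)%N -> (i < n)%N ->
     [/\ 1 < mu i, u i != 0, A *m u i = mu i *: u i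
       & in_unstable_subspace A (u i)]) /\
  (* pairwise orthogonal *)
  (forall i j, (n - p <= i)%N -> (i < n)%N -> (n - p <= j)%N -> (j < n)%N ->
     i <> j -> (u i)^T *m u j = 0) /\
  (* linearly independent *)
  (forall c : nat -> R, \sum_(n - p <= i < n) c i *: u i = 0 ->
     forall i, (n - p <= i)%N -> (i < n)%N -> c i = 0) /\
  (* spanning the unstable invariant subspace *)
  (forall w : 'cV[R]_(n + n), in_unstable_subspace A w ->
     exists c : nat -> R, w = \sum_(n - p <= i < n) c i *: u i).
Proof.
move=> _ _ _ _ horth hH hp1 hpn hmono hnn hneg hl0 ha ha4 hbmax hb1.
rewrite hH => A mu u.
have hb0 : 0 < beta by move: hbmax; rewrite gt_max => /andP[_ ->].
have hbl : -1 + alpha * lam 0%N / 2 < beta by move: hbmax; rewrite gt_max => /andP[-> _].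
split.
  move=> i h1 h2; have hl := hneg i h1 h2.
  have [hm _ _ _ _] := @mu_facts R alpha beta (lam i) hl ha hb0 hb1.
  split => //.
  - exact: (@u_neq0 R n lam v alpha beta horth i h2).
  - exact: (@eig_u R n lam v alpha beta horth i h2 hl ha hb0 hb1).
  - exact: (@u_unstable R n lam v alpha beta horth i h2 hl ha hb0 hb1).
split.
  move=> i j _ hi _ hj hij; exact: (@u_orth R n lam v alpha beta horth i j hi hj hij).
split.
  move=> c hc i h1 h2; exact: (@indep R n lam v alpha beta horth _ c hc i h1 h2).
move=> w hw; apply: (@span R n lam v alpha beta horth (n - p) w (leq_subr p n) _ hneg ha hb0 hb1 hw).
move=> i hi; split; first exact: hnn.
have hin : (i < n)%N by apply: leq_trans hi (leq_subr p n).
have := hmono 0%N i (leq0n i) hin.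
move: (hnn i hi) => h0 hle.
nra.
Qed.
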